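(* Let $A$ be a semilattice of groups. The set $\mathrm{iend}\,A$ of relatively invertible endomorphisms of $A$ is an (inverse) subsemigroup of the monoid $\mathrm{End}\,A$ (under composition), and it is isomorphic to $\mathcal I_{ui}(A)$.
   Context: A semilattice of groups is an inverse semigroup $A$ whose idempotents are central. An endomorphism $\varphi$ of $A$ is relatively invertible if there exist $\bar\varphi\in\mathrm{End}\,A$ and $e_\varphi\in E(A)$ such that $\bar\varphi(\varphi(a))=e_\varphi a$ and $\varphi(\bar\varphi(a))=\varphi(e_\varphi)a$ for all $a\in A$, $e_\varphi$ is the identity of $\bar\varphi(A)$ and $\varphi(e_\varphi)$ is the identity of $\varphi(A)$. $\mathcal I_{ui}(A)$ denotes the inverse semigroup of all isomorphisms between unital ideals of $A$ (ideals of the form $eA$, $e\in E(A)$), with the usual composition of partial bijections. *)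

(* Defs.v *)
(** A semilattice of groups: an inverse semigroup whose idempotents are central. *)
Record SLG := {
  carrier :> Type;
  mul : carrier -> carrier -> carrier;
  mulA : forall a b c, mul a (mul b c) = mul (mul a b) c;
  inverse_unique : forall a, exists! b, mul (mul a b) a = a /\ mul (mul b a) b = b;
  idem_central : forall e a, mul e e = e -> mul e a = mul a e
}.

Arguments mul {s} _ _.

Definition idem {A : SLG} (e : A) : Prop := mul e e = e.

Definition is_end {A : SLG} (f : A -> A) : Prop :=
  forall a b, f (mul a b) = mul (f a) (f b).

Definition identity_of {A : SLG} (u : A) (S : A -> Prop) : Prop :=
  S u /\ forall x, S x -> mul u x = x /\ mul x u = x.

Definition image {A : SLG} (f : A -> A) : A -> Prop := fun x => exists a, f a = x.

Definition rel_invertible {A : SLG} (phi : A -> A) : Prop :=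
  is_end phi /\
  exists (phibar : A -> A) (e : A),
    is_end phibar /\ idem e /\
    (forall a, phibar (phi a) = mul e a) /\
    (forall a, phi (phibar a) = mul (phi e) a) /\
    identity_of e (image phibar) /\
    identity_of (phi e) (image phi).

Definition iend (A : SLG) : (A -> A) -> Prop := fun phi => rel_invertible phi.

Definition uideal {A : SLG} (e : A) : A -> Prop := fun x => exists y, x = mul e y.

(** Partial maps A -> A, and their usual composition (first alpha, then beta). *)
Definition pcomp {A : SLG} (beta alpha : A -> option A) : A -> option A :=
  fun x => match alpha x with Some y => beta y | None => None end.

Definition ui_iso {A : SLG} (alpha : A -> option A) : Prop :=
  exists e f : A, idem e /\ idem f /\
    (forall x, uideal e x -> exists y, alpha x = Some y) /\
    (forall x, ~ uideal e x -> alpha x = None) /\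
    (forall x y, alpha x = Some y -> uideal f y) /\
    (forall y, uideal f y -> exists x, alpha x = Some y) /\
    (forall x x' y, alpha x = Some y -> alpha x' = Some y -> x = x') /\
    (forall x x' y y', alpha x = Some y -> alpha x' = Some y' ->
        alpha (mul x x') = Some (mul y y')).

Definition Iui (A : SLG) : (A -> option A) -> Prop := fun alpha => ui_iso alpha.

(* Main.v *)
Require Import Defs.
From Stdlib Require Import Classical ClassicalEpsilon FunctionalExtensionality.

Definition P (A : SLG) (phi : A -> A) (e : A) : Prop :=
  exists phibar : A -> A, is_end phibar /\ idem e /\
    (forall a, phibar (phi a) = mul e a) /\
    (forall a, phi (phibar a) = mul (phi e) a) /\
    identity_of e (image phibar) /\ identity_of (phi e) (image phi).

Lemma iend_P (A : SLG) (phi : A -> A) : iend A phi -> is_end phi /\ exists e, P A phi e.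
Proof.
  intros [He [pb [e H]]]. split; [exact He|]. exists e, pb. exact H.
Qed.

Lemma P_iend (A : SLG) (phi : A -> A) e : is_end phi -> P A phi e -> iend A phi.
Proof.
  intros He [pb H]. split; [exact He|]. exists pb, e. exact H.
Qed.

Lemma cen (A : SLG) (e a : A) : idem e -> mul e a = mul a e.
Proof. intro H. apply idem_central. exact H. Qed.

Lemma P_fix (A : SLG) phi (e : A) : is_end phi -> P A phi e ->
  forall a, phi (mul e a) = phi a.
Proof.
  intros He [pb (Hpb & Hid & H1 & H2 & [_ I1] & [_ I2])] a.
  rewrite He. apply I2. exists a. reflexivity.
Qed.

Lemma P_idem (A : SLG) phi (e : A) : is_end phi -> P A phi e -> idem (phi e).
Proof.
  intros He [pb (Hpb & Hid & H1 & H2 & [_ I1] & [_ I2])].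
  unfold idem. rewrite <- He. rewrite Hid. reflexivity.
Qed.

Lemma P_unique (A : SLG) phi (e e' : A) : is_end phi -> P A phi e -> P A phi e' -> e = e'.
Proof.
  intros He HP HP'.
  assert (Hf : phi e = phi e').
  { pose proof (P_idem A phi e He HP) as Hi.
    destruct HP as [pb (Hpb & Hid & H1 & H2 & [_ I1] & [_ I2])].
    destruct HP' as [pb' (Hpb' & Hid' & H1' & H2' & [_ I1'] & [_ I2'])].
    assert (Ia : mul (phi e) (phi e') = phi e') by (apply I2; eexists; reflexivity).
    assert (Ib : mul (phi e') (phi e) = phi e) by (apply I2'; eexists; reflexivity).
    rewrite <- Ib at 1. rewrite <- (cen A _ _ Hi). exact Ia. }
  destruct HP as [pb (Hpb & Hid & H1 & H2 & [_ I1] & [_ I2])].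
  destruct HP' as [pb' (Hpb' & Hid' & H1' & H2' & [_ I1'] & [_ I2'])].
  assert (E1 : e = mul e e') by (rewrite <- H1, <- Hf, H1; symmetry; exact Hid).
  assert (E2 : e' = mul e' e) by (rewrite <- H1', Hf, H1'; symmetry; exact Hid').
  rewrite E1, E2 at 1. rewrite <- E2. rewrite (cen A e e' Hid). rewrite <- E2. reflexivity.
Qed.

Definition Phi (A : SLG) (phi : A -> A) : A -> option A := fun x =>
  if excluded_middle_informative (exists e, P A phi e /\ uideal e x)
  then Some (phi x) else None.

Lemma Phi_in (A : SLG) phi (e x : A) : P A phi e -> uideal e x -> Phi A phi x = Some (phi x).
Proof.
  intros HP Hx. unfold Phi. destruct excluded_middle_informative as [_|n]; [reflexivity|].
  exfalso. apply n. exists e. auto.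
Qed.

Lemma Phi_out (A : SLG) phi (e x : A) : is_end phi -> P A phi e -> ~ uideal e x -> Phi A phi x = None.
Proof.
  intros He HP Hx. unfold Phi. destruct excluded_middle_informative as [[e' [HP' Hu]]|n]; [|reflexivity].
  rewrite <- (P_unique A phi e e' He HP HP') in Hu. contradiction.
Qed.

Lemma uideal_fix (A : SLG) (e x : A) : idem e -> uideal e x -> mul e x = x.
Proof. intros Hi [y ->]. rewrite mulA, Hi. reflexivity. Qed.

Lemma uideal_of (A : SLG) (e x : A) : mul e x = x -> uideal e x.
Proof. intros H. exists x. auto. Qed.

Lemma comp_P (A : SLG) phi psi (e1 e2 : A) : is_end phi -> is_end psi ->
  P A phi e1 -> P A psi e2 -> exists pb2, P A psi e2 /\
  (forall a, pb2 (psi a) = mul e2 a) /\ (forall a, psi (pb2 a) = mul (psi e2) a) /\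
  (forall x, image pb2 x -> mul e2 x = x) /\ is_end pb2 /\
  is_end (fun a => phi (psi a)) /\ P A (fun a => phi (psi a)) (pb2 e1).
Proof.
  intros He1 He2 HP1 HP2.
  pose proof (P_fix A phi e1 He1 HP1) as F1.
  pose proof (P_fix A psi e2 He2 HP2) as F2.
  destruct HP1 as [pb1 (Hpb1 & Hid1 & H11 & H21 & [M1 I11] & [N1 I21])].
  destruct HP2 as [pb2 (Hpb2 & Hid2 & H12 & H22 & [M2 I12] & [N2 I22])].
  exists pb2. split. { exists pb2. repeat split; auto; apply I12 || apply I22; auto. }
  split; [exact H12|]. split; [exact H22|]. split; [intros x Hx; apply I12; exact Hx|]. split; [exact Hpb2|].
  assert (Hend : is_end (fun a => phi (psi a))).
  { intros a b. rewrite He2, He1. reflexivity. }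
  split; [exact Hend|].
  assert (G : mul (pb2 e1) e2 = pb2 e1).
  { apply I12. exists e1. reflexivity. }
  assert (Gi : idem (pb2 e1)). { unfold idem. rewrite <- Hpb2, Hid1. reflexivity. }
  assert (Q : phi (psi (pb2 e1)) = mul (phi (psi e2)) (phi e1)).
  { rewrite H22, He1. reflexivity. }
  exists (fun a => pb2 (pb1 a)). split; [intros a b; rewrite Hpb1, Hpb2; reflexivity|].
  split; [exact Gi|].
  split.
  { intro a. rewrite H11, Hpb2, H12. rewrite mulA, G. reflexivity. }
  split.
  { intro a. rewrite H22, He1, H21, Q. rewrite <- mulA. reflexivity. }
  split.
  { split.
    - exists (phi e1). rewrite H11, Hid1. reflexivity.
    - intros x [a <-]. assert (L : mul (pb2 e1) (pb2 (pb1 a)) = pb2 (pb1 a)).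
      { rewrite <- Hpb2. f_equal. apply I11. exists a. reflexivity. }
      split; [exact L|]. rewrite <- (cen A _ _ Gi). exact L. }
  split.
  - exists (pb2 e1). reflexivity.
  - assert (Gi2 : idem (phi (psi (pb2 e1)))).
    { unfold idem. rewrite <- He1, <- He2, Gi. reflexivity. }
    intros x [a <-]. assert (L : mul (phi (psi (pb2 e1))) (phi (psi a)) = phi (psi a)).
    { rewrite Q, <- mulA. rewrite (proj1 (I21 (phi (psi a)) (ex_intro _ _ eq_refl))).
      rewrite <- He1. f_equal. apply I22. exists a. reflexivity. }
    split; [exact L|]. rewrite <- (cen A _ _ Gi2). exact L.
Qed.

Lemma inv_P (A : SLG) phi (e : A) : is_end phi -> P A phi e ->
  exists pb, is_end pb /\ P A pb (phi e) /\ (forall a, pb (phi a) = mul e a) /\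
    (forall a, phi (pb a) = mul (phi e) a) /\ (forall x, image pb x -> mul e x = x).
Proof.
  intros He HP. pose proof (P_idem A phi e He HP) as Hi.
  destruct HP as [pb (Hpb & Hid & H1 & H2 & [M1 I1] & [M2 I2])].
  assert (E : pb (phi e) = e) by (rewrite H1; exact Hid).
  exists pb. split; [exact Hpb|]. split.
  - exists phi. split; [exact He|]. split; [exact Hi|]. split; [exact H2|].
    split; [intro a; rewrite E; apply H1|]. rewrite E. split; split; auto.
  - split; [exact H1|]. split; [exact H2|]. intros x Hx; apply I1; exact Hx.
Qed.

Lemma idem_form (A : SLG) eps (e : A) : is_end eps -> P A eps e ->
  (forall a, eps (eps a) = eps a) -> forall a, eps a = mul e a.
Proof.
  intros He HP Hee.
  destruct HP as [pb (Hpb & Hid & H1 & H2 & [M1 I1] & [M2 I2])].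
  assert (K : forall a, mul e (eps a) = mul e a).
  { intro a. rewrite <- H1, Hee, H1. reflexivity. }
  assert (Kf : mul e (eps e) = e) by (rewrite K; exact Hid).
  assert (Kf2 : mul (eps e) e = e) by (rewrite <- (cen A _ _ Hid); exact Kf).
  assert (F : eps e = e).
  { transitivity (eps (eps (pb e))). { rewrite H2, Kf2. reflexivity. }
    rewrite Hee, H2. exact Kf2. }
  intro a. rewrite <- (proj1 (I2 (eps a) (ex_intro _ _ eq_refl))). rewrite F. apply K.
Qed.

Lemma idem_comm (A : SLG) eps eps' : iend A eps -> iend A eps' ->
  (forall a, eps (eps a) = eps a) -> (forall a, eps' (eps' a) = eps' a) ->
  forall a, eps (eps' a) = eps' (eps a).
Proof.
  intros H H' Hi Hi' a.
  destruct (iend_P A eps H) as [He [e HP]].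
  destruct (iend_P A eps' H') as [He' [e' HP']].
  assert (Ie : idem e) by (destruct HP as [? (_ & X & _)]; exact X).
  rewrite (idem_form A eps e He HP Hi), (idem_form A eps' e' He' HP' Hi').
  rewrite (idem_form A eps e He HP Hi), (idem_form A eps' e' He' HP' Hi').
  rewrite !mulA. rewrite (cen A _ _ Ie). reflexivity.
Qed.

Lemma Phi_some (A : SLG) phi (e x y : A) : is_end phi -> P A phi e ->
  Phi A phi x = Some y -> uideal e x /\ y = phi x.
Proof.
  intros He HP H. destruct (classic (uideal e x)) as [Hx|Hx].
  - rewrite (Phi_in A phi e x HP Hx) in H. inversion H. auto.
  - rewrite (Phi_out A phi e x He HP Hx) in H. discriminate.
Qed.

Lemma Phi_iso (A : SLG) phi : iend A phi -> Iui A (Phi A phi).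
Proof.
  intro H. destruct (iend_P A phi H) as [He [e HP]].
  pose proof (P_idem A phi e He HP) as Hi.
  pose proof HP as HP0.
  destruct HP0 as [pb (Hpb & Hid & H1 & H2 & [M1 I1] & [M2 I2])].
  exists e, (phi e). split; [exact Hid|]. split; [exact Hi|].
  split; [intros x Hx; eexists; apply (Phi_in A phi e x HP Hx)|].
  split; [intros x Hx; apply (Phi_out A phi e x He HP Hx)|].
  split.
  { intros x y Hxy. destruct (Phi_some A phi e x y He HP Hxy) as [_ ->].
    apply uideal_of. apply I2. eexists; reflexivity. }
  split.
  { intros y Hy. exists (pb y). rewrite (Phi_in A phi e (pb y) HP).
    - f_equal. rewrite H2. apply uideal_fix; auto.
    - apply uideal_of. apply I1. eexists; reflexivity. }
  split.
  { intros x x' y Hx Hx'. destruct (Phi_some A phi e x y He HP Hx) as [Ux ->].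
    destruct (Phi_some A phi e x' _ He HP Hx') as [Ux' E].
    rewrite <- (uideal_fix A e x Hid Ux), <- (uideal_fix A e x' Hid Ux').
    rewrite <- !H1, E. reflexivity. }
  intros x x' y y' Hx Hx'. destruct (Phi_some A phi e x y He HP Hx) as [Ux ->].
  destruct (Phi_some A phi e x' y' He HP Hx') as [Ux' ->].
  rewrite (Phi_in A phi e (mul x x') HP).
  - rewrite He. reflexivity.
  - destruct Ux as [z ->]. exists (mul z x'). rewrite mulA. reflexivity.
Qed.

Lemma Phi_inj (A : SLG) phi psi : iend A phi -> iend A psi -> Phi A phi = Phi A psi -> phi = psi.
Proof.
  intros H H' E.
  destruct (iend_P A phi H) as [He [e HP]].
  destruct (iend_P A psi H') as [He' [e' HP']].
  assert (Ie : idem e) by (destruct HP as [? (_ & X & _)]; exact X).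
  assert (Ie' : idem e') by (destruct HP' as [? (_ & X & _)]; exact X).
  assert (U1 : uideal e' e).
  { assert (Z : Phi A psi e = Some (phi e)).
    { rewrite <- E. apply (Phi_in A phi e e HP). apply uideal_of. exact Ie. }
    exact (proj1 (Phi_some A psi e' e _ He' HP' Z)). }
  assert (U2 : uideal e e').
  { assert (Z : Phi A phi e' = Some (psi e')).
    { rewrite E. apply (Phi_in A psi e' e' HP'). apply uideal_of. exact Ie'. }
    exact (proj1 (Phi_some A phi e e' _ He HP Z)). }
  apply uideal_fix in U1; [|exact Ie']. apply uideal_fix in U2; [|exact Ie].
  assert (Ee : e = e') by (transitivity (mul e' e); [symmetry; exact U1|]; rewrite (cen A _ _ Ie'); exact U2).
  subst e'.
  apply functional_extensionality. intro a.
  rewrite <- (P_fix A phi e He HP), <- (P_fix A psi e He' HP').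
  assert (Ua : uideal e (mul e a)) by (exists a; reflexivity).
  pose proof (Phi_in A phi e _ HP Ua) as Z1. pose proof (Phi_in A psi e _ HP' Ua) as Z2.
  rewrite E, Z2 in Z1. congruence.
Qed.

Lemma mul_dist (A : SLG) (e a b : A) : idem e -> mul e (mul a b) = mul (mul e a) (mul e b).
Proof.
  intro Hi. rewrite <- (mulA _ e a (mul e b)). rewrite (mulA _ a e b).
  rewrite <- (cen A e a Hi). rewrite <- mulA, (mulA _ e e), Hi. reflexivity.
Qed.

Lemma Phi_surj (A : SLG) alpha : Iui A alpha -> exists phi, iend A phi /\ Phi A phi = alpha.
Proof.
  intros (e & f & He & Hf & Hdom & Hnone & Himg & Hsurj & Hinj & Hhom).
  pose proof He as He0. pose proof Hf as Hf0. unfold idem in He0, Hf0.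
  assert (Hsome : forall x y, alpha x = Some y -> uideal e x).
  { intros x y Hx. destruct (classic (uideal e x)) as [U|U]; auto.
    rewrite Hnone in Hx; auto. discriminate. }
  set (phi := fun a => match alpha (mul e a) with Some y => y | None => a end).
  assert (Hphi : forall a, alpha (mul e a) = Some (phi a)).
  { intro a. unfold phi. destruct (Hdom (mul e a)) as [y Hy]; [exists a; reflexivity|].
    rewrite Hy. reflexivity. }
  set (pb := fun a => epsilon (inhabits a) (fun x => alpha x = Some (mul f a))).
  assert (Hpb : forall a, alpha (pb a) = Some (mul f a)).
  { intro a. unfold pb. apply epsilon_spec. apply Hsurj. exists a. reflexivity. }
  assert (Ae : alpha e = Some f).
  { destruct (Hdom e) as [g Hg]; [exists e; symmetry; exact He|].
    assert (Gi : mul g g = g).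
    { pose proof (Hhom _ _ _ _ Hg Hg) as X. rewrite He0, Hg in X. congruence. }
    assert (Gy : forall y, uideal f y -> mul g y = y).
    { intros y Hy. destruct (Hsurj y Hy) as [x Hx].
      pose proof (Hhom _ _ _ _ Hg Hx) as X.
      rewrite (uideal_fix A e x He (Hsome _ _ Hx)), Hx in X. congruence. }
    rewrite Hg. f_equal.
    assert (G1 : mul g f = f) by (apply Gy; apply uideal_of; exact Hf).
    assert (G2 : mul f g = g) by (apply uideal_fix; [exact Hf| exact (Himg _ _ Hg)]).
    rewrite <- G2 at 1. rewrite (cen A f g Hf). exact G1. }
  assert (Pe : phi e = f).
  { pose proof (Hphi e) as X. rewrite He0, Ae in X. congruence. }
  assert (Endphi : is_end phi).
  { intros a b. pose proof (Hphi (mul a b)) as X.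
    rewrite (mul_dist A e a b He), (Hhom _ _ _ _ (Hphi a) (Hphi b)) in X. congruence. }
  assert (HP : P A phi e).
  { exists pb. split.
    { intros a b. apply (Hinj _ _ (mul f (mul a b))); [apply Hpb|].
      rewrite (Hhom _ _ _ _ (Hpb a) (Hpb b)). rewrite (mul_dist A f a b Hf). reflexivity. }
    split; [exact He|].
    split.
    { intro a. apply (Hinj _ _ (phi a)); [|apply Hphi].
      rewrite Hpb. f_equal. apply uideal_fix; [exact Hf|]. exact (Himg _ _ (Hphi a)). }
    split.
    { intro a. rewrite Pe. pose proof (Hphi (pb a)) as X.
      rewrite (uideal_fix A e _ He (Hsome _ _ (Hpb a))), Hpb in X. congruence. }
    split.
    { split.
      - exists f. apply (Hinj _ _ f); [|exact Ae]. rewrite Hpb. rewrite Hf0. reflexivity.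
      - intros x [a <-]. assert (L : mul e (pb a) = pb a)
          by (apply uideal_fix; [exact He|exact (Hsome _ _ (Hpb a))]).
        split; [exact L|]. rewrite <- (cen A _ _ He). exact L. }
    rewrite Pe. split.
    - exists e. exact Pe.
    - intros x [a <-]. assert (L : mul f (phi a) = phi a)
        by (apply uideal_fix; [exact Hf|exact (Himg _ _ (Hphi a))]).
      split; [exact L|]. rewrite <- (cen A _ _ Hf). exact L. }
  exists phi. split; [exact (P_iend A phi e Endphi HP)|].
  apply functional_extensionality. intro x.
  destruct (classic (uideal e x)) as [U|U].
  - rewrite (Phi_in A phi e x HP U). rewrite <- (Hphi x). rewrite (uideal_fix A e x He U). reflexivity.
  - rewrite (Phi_out A phi e x Endphi HP U). symmetry. apply Hnone. exact U.
Qed.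

Lemma Phi_comp (A : SLG) phi psi : iend A phi -> iend A psi ->
  Phi A (fun a => phi (psi a)) = pcomp (Phi A phi) (Phi A psi).
Proof.
  intros H H'.
  destruct (iend_P A phi H) as [He1 [e1 HP1]].
  destruct (iend_P A psi H') as [He2 [e2 HP2]].
  destruct (comp_P A phi psi e1 e2 He1 He2 HP1 HP2)
    as (pb2 & _ & H12 & H22 & I12 & Hpb2 & Hend & HP).
  assert (Ie1 : idem e1) by (destruct HP1 as [? (_ & X & _)]; exact X).
  assert (Ie2 : idem e2) by (destruct HP2 as [? (_ & X & _)]; exact X).
  set (g := pb2 e1).
  assert (Gg : mul e2 g = g) by (apply I12; exists e1; reflexivity).
  apply functional_extensionality. intro x. unfold pcomp.
  destruct (classic (uideal g x)) as [U|U].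
  - rewrite (Phi_in A _ g x HP U).
    assert (U2 : uideal e2 x).
    { destruct U as [y ->]. exists (mul g y). rewrite mulA, Gg. reflexivity. }
    rewrite (Phi_in A psi e2 x HP2 U2).
    assert (U1 : uideal e1 (psi x)).
    { destruct U as [y ->]. rewrite He2. unfold g. rewrite H22.
      exists (mul (psi e2) (psi y)). rewrite <- (cen A e1 (psi e2) Ie1). rewrite mulA. reflexivity. }
    rewrite (Phi_in A phi e1 _ HP1 U1). reflexivity.
  - rewrite (Phi_out A _ g x Hend HP U).
    destruct (classic (uideal e2 x)) as [U2|U2].
    + rewrite (Phi_in A psi e2 x HP2 U2).
      destruct (classic (uideal e1 (psi x))) as [U1|U1].
      * exfalso. apply U. destruct U1 as [z Hz].
        exists (pb2 z). unfold g. rewrite <- Hpb2, <- Hz, H12.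
        symmetry. apply uideal_fix; assumption.
      * rewrite (Phi_out A phi e1 _ He1 HP1 U1). reflexivity.
    + rewrite (Phi_out A psi e2 x He2 HP2 U2). reflexivity.
Qed.

Theorem proposition3p4 (A : SLG) :
  (* iend A is closed under composition: a subsemigroup of End A *)
  (forall phi psi : A -> A, iend A phi -> iend A psi ->
     iend A (fun a => phi (psi a))) /\
  (* and it is an inverse semigroup: unique inverses inside iend A *)
  (forall phi : A -> A, iend A phi ->
     exists psi : A -> A, iend A psi /\
       (fun a => phi (psi (phi a))) = phi /\
       (fun a => psi (phi (psi a))) = psi /\
       (forall chi : A -> A, iend A chi ->
          (fun a => phi (chi (phi a))) = phi ->
          (fun a => chi (phi (chi a))) = chi -> chi = psi)) /\
  (* iend A is isomorphic to I_ui(A) *)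
  (exists Phi : (A -> A) -> (A -> option A),
     (forall phi, iend A phi -> Iui A (Phi phi)) /\
     (forall phi psi, iend A phi -> iend A psi -> Phi phi = Phi psi -> phi = psi) /\
     (forall alpha, Iui A alpha -> exists phi, iend A phi /\ Phi phi = alpha) /\
     (forall phi psi, iend A phi -> iend A psi ->
        Phi (fun a => phi (psi a)) = pcomp (Phi phi) (Phi psi))).
Proof.
  assert (Comp : forall phi psi : A -> A, iend A phi -> iend A psi ->
     iend A (fun a => phi (psi a))).
  { intros phi psi H H'.
    destruct (iend_P A phi H) as [He1 [e1 HP1]].
    destruct (iend_P A psi H') as [He2 [e2 HP2]].
    destruct (comp_P A phi psi e1 e2 He1 He2 HP1 HP2) as (pb2 & _ & _ & _ & _ & _ & Hend & HP).
    exact (P_iend A _ _ Hend HP). }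
  split; [exact Comp|].
  split.
  - intros phi H.
    destruct (iend_P A phi H) as [He [e HP]].
    destruct (inv_P A phi e He HP) as (pb & Hpb & HPb & H1 & H2 & I1).
    assert (Ie : idem e) by (destruct HP as [? (_ & X & _)]; exact X).
    assert (Ipb : iend A pb) by exact (P_iend A pb _ Hpb HPb).
    assert (R1 : forall a, phi (pb (phi a)) = phi a).
    { intro a. rewrite H1. apply (P_fix A phi e He HP). }
    assert (R2 : forall a, pb (phi (pb a)) = pb a).
    { intro a. rewrite H1. apply I1. exists a. reflexivity. }
    exists pb. split; [exact Ipb|].
    split; [apply functional_extensionality; exact R1|].
    split; [apply functional_extensionality; exact R2|].
    intros chi Hc E1 E2.
    assert (C1 : forall a, phi (chi (phi a)) = phi a) by (intro a; exact (f_equal (fun g => g a) E1)).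
    assert (C2 : forall a, chi (phi (chi a)) = chi a) by (intro a; exact (f_equal (fun g => g a) E2)).
    assert (I_1 : forall a, chi (phi (chi (phi a))) = chi (phi a)) by (intro; apply C2).
    assert (I_2 : forall a, pb (phi (pb (phi a))) = pb (phi a)) by (intro; apply R2).
    assert (I_3 : forall a, phi (chi (phi (chi a))) = phi (chi a)) by (intro; apply C1).
    assert (I_4 : forall a, phi (pb (phi (pb a))) = phi (pb a)) by (intro; apply R1).
    pose proof (idem_comm A _ _ (Comp _ _ Hc H) (Comp _ _ Ipb H) I_1 I_2) as K12.
    pose proof (idem_comm A _ _ (Comp _ _ H Hc) (Comp _ _ H Ipb) I_3 I_4) as K34.
    apply functional_extensionality. intro a.
    transitivity (pb (phi (chi a))).
    + cbv beta in K12. transitivity (chi (phi (pb (phi (chi a))))).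
      * rewrite R1. symmetry. apply C2.
      * rewrite K12, C2. reflexivity.
    + cbv beta in K34. transitivity (pb (phi (pb (phi (chi a))))).
      * symmetry. apply R2.
      * rewrite <- K34. rewrite C1. apply R2.
  - exists (Phi A). split; [exact (Phi_iso A)|].
    split; [exact (Phi_inj A)|].
    split; [exact (Phi_surj A)|].
    exact (Phi_comp A).
Qed.
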